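(* Let $R$ be a ring and $\mathcal{L}$ a class of left $R$-modules containing $0$. Then $\mathscr{C}^-(\mathcal{L})\subseteq dg\widetilde{\mathcal{L}}$.
   Context: Complexes are homologically indexed; a complex $X$ is bounded below if there is $b$ with $X_n=0$ for all $n\le b$. $\mathscr{C}^-(\mathcal{L})$ is the class of bounded below complexes with all terms in $\mathcal{L}$. For modules, $\underline{\mathfrak{Pr}}^{-1}_{R\text{-Mod}}(\mathcal{L})$ is the class of modules $N$ such that for every $L\in\mathcal{L}$, every morphism $L\to N$ factors through a projective module. For complexes $X,Y$, $\mathrm{Hom}^\bullet(X,Y)$ is the complex of abelian groups with $\mathrm{Hom}^\bullet(X,Y)_n=\prod_i\mathrm{Hom}_R(X_i,Y_{i+n})$ and differential $\psi\mapsto(d^Y_{i+n}\psi_i-(-1)^n\psi_{i-1}d^X_i)_i$. A complex $X$ is a $dg\mathcal{L}$ complex if $X_n\in\mathcal{L}$ for all $n$ and $\mathrm{Hom}^\bullet(X,G)$ is exact for every exact complex $G$ all of whose cycles $\mathrm{Ker}\,d_n^G$ lie in $\underline{\mathfrak{Pr}}^{-1}_{R\text{-Mod}}(\mathcal{L})$; $dg\widetilde{\mathcal{L}}$ is the class of $dg\mathcal{L}$ complexes. *)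

(* Defs.v *)
From HB Require Import structures.
From mathcomp Require Import all_boot all_order all_algebra.
Set Implicit Arguments. Unset Strict Implicit. Unset Printing Implicit Defensive.
Import Order.TTheory GRing.Theory Num.Theory.
Local Open Scope ring_scope.

Section Kernel.
Variables (R : pzRingType) (U V : lmodType R) (f : {linear U -> V}).

Definition kerp : pred U := fun x => f x == 0.

Lemma kerp_closed : subsemimod_closed kerp.
Proof.
split; first split.
- by rewrite unfold_in /kerp /= linear0.
- by move=> x y; rewrite !unfold_in /kerp /= linearD => /eqP -> /eqP ->; rewrite addr0.
- by move=> a x; rewrite !unfold_in /kerp /= => /eqP fx0; rewrite linearZZ fx0 scaler0.
Qed.

Record kerT := KerT { kval : U; kvalP : kerp kval }.
HB.instance Definition _ := [isSub for kval].
HB.instance Definition _ := [Choice of kerT by <:].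
HB.instance Definition _ := GRing.SubChoice_isSubLmodule.Build R U kerp kerT kerp_closed.

End Kernel.

Section Complexes.
Variable R : pzRingType.

Record complex := Complex {
  cobj :> int -> lmodType R;
  cdif : forall n : int, {linear cobj n -> cobj (n - 1)};
  cdd : forall (n : int) (x : cobj n), cdif (n - 1) (cdif n x) = 0 }.

Definition tr (X : int -> lmodType R) (a b : int) (e : a = b) (x : X a) : X b :=
  match e in _ = c return X c with erefl => x end.

Lemma idx_succ_pred (n : int) : n + 1 - 1 = n.
Proof. by rewrite addrK. Qed.
Lemma idx_hom1 (i m : int) : i - 1 + m = i + m - 1.
Proof. by rewrite addrAC. Qed.
Lemma idx_hom2 (i n : int) : i + (n + 1) - 1 = i + n.
Proof. by rewrite addrA addrK. Qed.

Definition projective (P : lmodType R) : Prop :=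
  forall (M N : lmodType R) (g : {linear M -> N}) (f : {linear P -> N}),
    (forall y : N, exists x : M, g x = y) ->
    exists h : {linear P -> M}, forall p : P, g (h p) = f p.

Definition factors_through_projective (A N : lmodType R) (f : {linear A -> N}) : Prop :=
  exists P : lmodType R, projective P /\
    exists (h : {linear A -> P}) (g : {linear P -> N}), forall x : A, f x = g (h x).

Definition PrInv (L : lmodType R -> Prop) (N : lmodType R) : Prop :=
  forall A : lmodType R, L A -> forall f : {linear A -> N}, factors_through_projective f.

(* exact complex: Ker d_n = Im d_{n+1} (Im is always in Ker since d d = 0) *)
Definition exact_complex (G : complex) : Prop :=
  forall (n : int) (y : G n), cdif G n y = 0 ->
    exists z : G (n + 1), tr (idx_succ_pred n) (cdif G (n + 1) z) = y.

Definition cycles (G : complex) (n : int) : lmodType R := kerT (cdif G n).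

Definition sgn (n : int) (M : lmodType R) (v : M) : M :=
  if odd (absz n) then - v else v.

Definition homdeg (X Y : complex) (n : int) :=
  forall i : int, {linear X i -> Y (i + n)}.

Definition hom_d (X Y : complex) (n : int) (psi : homdeg X Y n) (i : int) (x : X i)
  : Y (i + n - 1) :=
  cdif Y (i + n) (psi i x)
  - sgn n (tr (idx_hom1 i n) (psi (i - 1) (cdif X i x))).

Definition hom_exact (X Y : complex) : Prop :=
  forall (n : int) (psi : homdeg X Y n),
    (forall (i : int) (x : X i), hom_d psi x = 0) ->
    exists phi : homdeg X Y (n + 1),
      forall (i : int) (x : X i), tr (idx_hom2 i n) (hom_d phi x) = psi i x.

Definition bounded_below (X : complex) : Prop :=
  exists b : int, forall n : int, n <= b -> forall x : X n, x = 0.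

Definition in_Cminus (L : lmodType R -> Prop) (X : complex) : Prop :=
  bounded_below X /\ forall n : int, L (X n).

Definition dg_complex (L : lmodType R -> Prop) (X : complex) : Prop :=
  (forall n : int, L (X n)) /\
  forall G : complex, exact_complex G ->
    (forall n : int, PrInv L (cycles G n)) -> hom_exact X G.

End Complexes.

(* Main.v *)
Require Import Defs.
From HB Require Import structures.
From mathcomp Require Import all_boot all_order all_algebra.
From mathcomp Require Import ring zify.
From Stdlib Require Import ClassicalEpsilon.
Set Implicit Arguments. Unset Strict Implicit. Unset Printing Implicit Defensive.
Import Order.TTheory GRing.Theory Num.Theory.
Local Open Scope ring_scope.

Definition mklin (R : pzRingType) (U V : lmodType R) (f : U -> V)
  (h : linear f) : U -> V := f.
HB.instance Definition _ (R : pzRingType) (U V : lmodType R) (f : U -> V)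
  (h : linear f) := GRing.isLinear.Build R U V *:%R (mklin h) h.

Lemma abs_step (R : pzRingType) (L : lmodType R -> Prop)
  (Xj A B C : lmodType R) (dA : {linear A -> B}) (dB : {linear B -> C}) :
  L Xj -> PrInv L (kerT dB) -> (forall y, dB y = 0 -> exists z, dA z = y) ->
  (forall z, dB (dA z) = 0) ->
  forall th : Xj -> B, linear th -> (forall x, dB (th x) = 0) ->
  exists q : {linear Xj -> A}, forall x, dA (q x) = th x.
Proof.
move=> LX PI ex dd th lin hk.
have hk' : forall x, kerp dB (th x) by move=> x; apply/eqP.
have dd' : forall z, kerp dB (dA z) by move=> z; apply/eqP.
have l1 : linear (fun x => KerT (hk' x)).
  by move=> a x y; apply/val_inj; rewrite /= lin.
have l2 : linear (fun z => KerT (dd' z)).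
  by move=> a x y; apply/val_inj; rewrite /= linearP.
have [P [prP [h [g hg]]]] := PI Xj LX (mklin l1 : {linear _ -> _}).
have surj : forall y : kerT dB, exists z, (mklin l2 : {linear _ -> _}) z = y.
  move=> y; have [z hz] := ex (kval y) (eqP (kvalP y)).
  by exists z; apply: val_inj; rewrite /= /mklin /= hz.
have [k hk2] := prP A (kerT dB) (mklin l2 : {linear _ -> _}) g surj.
exists (k \o h : {linear _ -> _}) => x /=.
have := congr1 val (hk2 (h x)); rewrite /= /mklin /= => ->.
by rewrite -hg /mklin.
Qed.

Section T.
Context (R : pzRingType).
Implicit Types (F : int -> lmodType R).

Lemma tr_id F a (e : a = a) (x : F a) : tr e x = x.
Proof. by rewrite (eq_irrelevance e erefl). Qed.
Lemma tr_irr F a b (e e' : a = b) (x : F a) : tr e x = tr e' x.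
Proof. by rewrite (eq_irrelevance e e'). Qed.
Lemma tr_comp F a b c (e1 : a = b) (e2 : b = c) (x : F a) :
  tr e2 (tr e1 x) = tr (etrans e1 e2) x.
Proof. by case: c / e2. Qed.
Lemma trD F a b (e : a = b) (x y : F a) : tr e (x + y) = tr e x + tr e y.
Proof. by case: b / e. Qed.
Lemma trN F a b (e : a = b) (x : F a) : tr e (- x) = - tr e x.
Proof. by case: b / e. Qed.
Lemma trZ F a b (e : a = b) c (x : F a) : tr e (c *: x) = c *: tr e x.
Proof. by case: b / e. Qed.
Lemma tr0 F a b (e : a = b) : tr e (0 : F a) = 0.
Proof. by case: b / e. Qed.
Lemma trB F a b (e : a = b) (x y : F a) : tr e (x - y) = tr e x - tr e y.
Proof. by rewrite trD trN. Qed.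
Lemma tr_sgn F a b (e : a = b) m (x : F a) : tr e (sgn m x) = sgn m (tr e x).
Proof. by rewrite /sgn; case: ifP => _ //; rewrite trN. Qed.
Lemma sgnD m (M : lmodType R) (x y : M) : sgn m (x + y) = sgn m x + sgn m y.
Proof. by rewrite /sgn; case: ifP => _ //; rewrite opprD. Qed.
Lemma sgnZ m (M : lmodType R) c (x : M) : sgn m (c *: x) = c *: sgn m x.
Proof. by rewrite /sgn; case: ifP => _ //; rewrite scalerN. Qed.
Lemma sgnN m (M : lmodType R) (x : M) : sgn m (- x) = - sgn m x.
Proof. by rewrite /sgn; case: ifP => _ //. Qed.
Lemma sgn0 m (M : lmodType R) : sgn m (0 : M) = 0.
Proof. by rewrite /sgn; case: ifP => _ //; rewrite oppr0. Qed.
Lemma sgnK m (M : lmodType R) (x : M) : sgn m (sgn m x) = x.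
Proof. by rewrite /sgn; case: (odd _) => //; rewrite opprK. Qed.
Lemma sgn_lin m (M N : lmodType R) (f : {linear M -> N}) (x : M) :
  f (sgn m x) = sgn m (f x).
Proof. by rewrite /sgn; case: ifP => _ //; rewrite linearN. Qed.
Lemma sgnS m (M : lmodType R) (x : M) : sgn (m + 1) x = - sgn m x.
Proof.
rewrite /sgn; case: m => [k|[|k]] /=.
- by rewrite addn1 /=; case: (odd k); rewrite ?opprK.
- by rewrite opprK.
- by rewrite subn1 /= negbK; case: (odd k); rewrite ?opprK.
Qed.

Lemma cdif_tr (G : complex R) a b (e : a = b) (e' : a - 1 = b - 1) (x : G a) :
  cdif G b (tr e x) = tr e' (cdif G a x).
Proof. by move: e'; destruct e => e'; rewrite (tr_id (F := cobj G) e'). Qed.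

Lemma exact_gen (G : complex R) (hG : exact_complex G) a b (e : a - 1 = b)
  (y : G b) : cdif G b y = 0 -> exists z : G a, tr e (cdif G a z) = y.
Proof.
have ea : a = b + 1 by rewrite -e subrK.
subst a => /hG [z hz]; exists z; by rewrite (tr_irr _ (idx_succ_pred b)).
Qed.

Lemma step (L : lmodType R -> Prop) (X G : complex R) n (psi : homdeg X G n)
 (hpsi : forall i (x : X i), hom_d psi x = 0) (hG : exact_complex G)
 (PIG : forall m, PrInv L (cycles G m))
 j (f : homdeg X G (n+1)) (LXj : L (X j))
 (hP : forall x : X j, tr (idx_hom2 (j-1) n) (cdif G (j-1+(n+1)) (f (j-1) (cdif X j x)))
        = psi (j-1) (cdif X j x)) :
 exists q : {linear X j -> G (j+(n+1))}, forall x,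
   tr (idx_hom2 j n) (cdif G (j+(n+1)) (q x)
      - sgn (n+1) (tr (idx_hom1 j (n+1)) (f (j-1) (cdif X j x)))) = psi j x.
Proof.
have e3 : j - 1 + (n+1) = j + n by ring.
pose th x := psi j x - sgn n (tr e3 (f (j-1) (cdif X j x))).
have linA : linear (fun z : G (j + (n+1)) => tr (idx_hom2 j n) (cdif G _ z)).
  by move=> c u v; rewrite linearP trD trZ.
have linth : linear th.
  move=> c u v; rewrite /th.
  have -> : psi j (c *: u + v) = c *: psi j u + psi j v by rewrite linearP.
  have -> : f (j-1) (cdif X j (c *: u + v)) = c *: f (j-1) (cdif X j u) + f (j-1) (cdif X j v).
    by rewrite !linearP.
  by rewrite trD trZ sgnD sgnZ opprD addrACA scalerBr.
have ex := exact_gen hG (idx_hom2 j n).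
have dd : forall z, cdif G (j+n) ((mklin linA : {linear _ -> _}) z) = 0.
  move=> z; have e' : j + (n + 1) - 1 - 1 = j + n - 1 by ring.
  by rewrite /mklin /= (cdif_tr _ e') cdd tr0.
have hcyc : forall x, cdif G (j+n) (th x) = 0.
  move=> x; rewrite /th linearB sgn_lin.
  have e4 : j - 1 + (n + 1) - 1 = j + n - 1 by ring.
  rewrite (cdif_tr _ e4).
  have := hpsi j x; rewrite /hom_d => /eqP; rewrite subr_eq0 => /eqP ->.
  rewrite -hP tr_comp (tr_irr _ e4); exact: subrr.
have [q hq] := @abs_step _ L _ _ _ _ (mklin linA : {linear _ -> _}) (cdif G (j+n)) LXj (PIG (j+n)) ex dd th linth hcyc.
exists q => x; rewrite trB tr_sgn sgnS.
have hqx : tr (idx_hom2 j n) (cdif G (j + (n+1)) (q x)) = th x := hq x.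
rewrite hqx /th.
by rewrite tr_comp (tr_irr _ e3) opprK subrK.
Qed.
End T.

Section Main.
Context (R : pzRingType) (L : lmodType R -> Prop) (X G : complex R) (n : int)
  (psi : homdeg X G n) (b : int).

Definition upd m (f : homdeg X G m) j (q : {linear X j -> G (j + m)}) : homdeg X G m :=
  fun i => match j =P i with
  | ReflectT e => match e in _ = c return {linear X c -> G (c + m)} with erefl => q end
  | ReflectF _ => f i end.

Lemma upd_eq m (f : homdeg X G m) j q : upd (j:=j) f q j = q.
Proof.
rewrite /upd; case: eqP => [e|]; last by [].
by rewrite (eq_irrelevance e erefl).
Qed.

Lemma upd_ne m (f : homdeg X G m) j q i : j != i -> upd (j:=j) f q i = f i.
Proof. by rewrite /upd; case: eqP. Qed.

Definition Eqq (f : homdeg X G (n+1)) j (q : {linear X j -> G (j + (n+1))}) :=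
  forall x : X j, tr (idx_hom2 j n) (cdif G (j+(n+1)) (q x)
      - sgn (n+1) (tr (idx_hom1 j (n+1)) (f (j-1) (cdif X j x)))) = psi j x.

Definition Eq' (f : homdeg X G (n+1)) i :=
  forall x : X i, tr (idx_hom2 i n) (hom_d f x) = psi i x.

Lemma zlin (U V : lmodType R) : linear (fun _ : U => (0 : V)).
Proof. by move=> c u v; rewrite scaler0 addr0. Qed.

Definition zfam : homdeg X G (n+1) := fun i => mklin (@zlin (X i) (G (i + (n+1)))).

Fixpoint Fseq (k : nat) : homdeg X G (n+1) :=
  match k with
  | 0 => zfam
  | k'.+1 => let f := Fseq k' in
     upd (j := b + k'.+1%:Z) f (epsilon (inhabits (mklin (@zlin _ _) : {linear _ -> _})) (fun q => Eqq (j := b + k'.+1%:Z) f q))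
  end.


Lemma Fseq_S k i : i <= b + k%:Z -> Fseq k.+1 i = Fseq k i.
Proof. by move=> hi; rewrite /= upd_ne //; apply/eqP => e; lia. Qed.

Lemma Fseq_le k m i : (k <= m)%N -> i <= b + k%:Z -> Fseq m i = Fseq k i.
Proof.
elim: m => [|m IH] hkm hi; first by move: hkm; rewrite leqn0 => /eqP ->.
move: hkm; rewrite leq_eqVlt => /orP [/eqP -> //|hkm].
rewrite Fseq_S ?IH //; lia.
Qed.

Lemma Eq'_ext (f g : homdeg X G (n+1)) i :
  f i = g i -> f (i-1) = g (i-1) -> Eq' f i -> Eq' g i.
Proof. by rewrite /Eq' /hom_d => e1 e2 h x; rewrite -e1 -e2; exact: h. Qed.

Lemma Eq'_zero f i : (forall x : X i, x = 0) -> Eq' f i.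
Proof.
move=> hz x; rewrite (hz x) /hom_d !linear0 tr0 sgn0 subr0 tr0 //.
Qed.

Lemma hP_of (f : homdeg X G (n+1)) j :
  ((forall x : X (j-1), x = 0) \/ Eq' f (j-1)) ->
  forall x : X j, tr (idx_hom2 (j-1) n) (cdif G (j-1+(n+1)) (f (j-1) (cdif X j x)))
        = psi (j-1) (cdif X j x).
Proof.
case=> [hz|h] x; first by rewrite (hz (cdif X j x)) !linear0 tr0.
by have := h (cdif X j x); rewrite /hom_d cdd !linear0 tr0 sgn0 subr0.
Qed.

Lemma Good (hpsi : forall i (x : X i), hom_d psi x = 0) (hG : exact_complex G)
  (PIG : forall m, PrInv L (cycles G m)) (LX : forall m, L (X m))
  (hb : forall m, m <= b -> forall x : X m, x = 0) k :
  forall i, b < i <= b + k%:Z -> Eq' (Fseq k) i.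
Proof.
elim: k => [|k IH] i /andP [h1 h2]; first by lia.
have [ei|ne] := eqVneq i (b + k.+1%:Z); last first.
  apply: (@Eq'_ext (Fseq k)); rewrite ?Fseq_S //; try lia.
  by apply: IH; apply/andP; split; lia.
subst i.
pose P := fun q => Eqq (j := b + k.+1%:Z) (Fseq k) q.
have hq : P (epsilon (inhabits (mklin (@zlin _ _) : {linear _ -> _})) P).
  apply: epsilon_spec; apply: step => //; apply: hP_of.
  have [k0|kpos] : k = 0%N \/ (0 < k)%N by case: (k) => [|?]; [left|right].
    by left => x; apply: hb; subst k; lia.
  by right; apply: IH; apply/andP; split; lia.
change (Eq' (upd (j := b + k.+1%:Z) (Fseq k)
   (epsilon (inhabits (mklin (@zlin _ _) : {linear _ -> _})) P)) (b + k.+1%:Z)).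
move=> x; rewrite /hom_d upd_eq upd_ne; last by apply/eqP; lia.
exact: hq.
Qed.

End Main.

Theorem lemma3p5 (R : pzRingType) (L : lmodType R -> Prop)
  (L0 : exists Z : lmodType R, L Z /\ forall z : Z, z = 0) :
  forall X : complex R, in_Cminus L X -> dg_complex L X.
Proof.
move=> X [[b hb] LX]; split => // G hG PIG n psi hpsi.
exists (fun i => Fseq psi b (absz (i - b)%R) i) => i.
have [hi|hi] := lerP i b; first exact: Eq'_zero (hb i hi).
apply: (Eq'_ext (f := Fseq psi b (absz (i - b)%R))) => //.
  rewrite (@Fseq_le _ _ _ _ psi b (absz (i - 1 - b)%R) (absz (i - b)%R) (i - 1)%R) //; lia.
apply: (Good hpsi hG PIG LX hb); apply/andP; split; lia.
Qed.
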